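(* Let $(\mathcal N,\mathcal E)$ be a connected undirected graph on $\mathcal N=\{1,\dots,n\}$ and $W$ a symmetric stochastic matrix with $w_{ij}=0$ for $i\ne j$, $(i,j)\notin\mathcal E$, $w_{ii}>1/2$ for all $i$, and $w_{ij}$ rational in $(0,1)$ for $(i,j)\in\mathcal E$. Let $\mathbb N(t)=(\mathcal N,\mathcal E(t))$, $\mathcal E(t)\subseteq\mathcal E$, be random undirected graphs with $\Pr[(i,j)\in\mathcal E(t)\mid\sigma(\mathbb N(1),\dots,\mathbb N(t-1))]\ge p$ for all $t$, all $(i,j)\in\mathcal E$, for a constant $p>0$; define $w_{ij}(t)=w_{ij}$ if $(i,j)\in\mathcal E(t)$, $0$ otherwise ($i\ne j$), and $w_{ii}(t)=1-\sum_{j\ne i}w_{ij}(t)$. For each $i$ let $x_i(1),x_i(2),\dots$ be i.i.d. samples of $X_i$ with $|X_i|\le K$, $\bar x_i=E[X_i]$, $z_i(t)=\frac1t\sum_{\tau\le t}x_i(\tau)$. Fix $\Delta>0$, let $\mathcal B=\{k\Delta+\Delta/2:k=0,1,\dots\}$, $\mathcal R(x)$ the multiple $k\Delta$ ($k=0,1,\dots$) nearest to $x$ with $\mathcal R(k\Delta+\Delta/2)=(k+1)\Delta$, $\tilde z_i(t)=\mathcal R(z_i(t))$, $\Delta\tilde z(t+1)=\tilde z(t+1)-\tilde z(t)$. Let $\mathcal Q$ be the element-wise truncation, ceiling, or rounding-to-integer quantizer and let $$y(t+1)=W(t)\mathcal Q(y(t))+y(t)-\mathcal Q(y(t))+\Delta\tilde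 z(t+1),\qquad t=1,2,\dots.$$ If $\bar x_i\notin\mathcal B$ for all $i$, then almost surely there is a finite set containing $y_i(t)$ for all $t\in\{1,2,\dots\}$ and all $i\in\mathcal N$. *)

(* Defs.v *)
From HB Require Import structures.
From mathcomp Require Import all_boot all_order all_algebra.
From mathcomp Require Import all_classical all_reals all_analysis.
Set Implicit Arguments. Unset Strict Implicit. Unset Printing Implicit Defensive.
Import Order.TTheory GRing.Theory Num.Theory.
Import numFieldNormedType.Exports.
Local Open Scope classical_set_scope.
Local Open Scope ring_scope.

Inductive quantizer := Truncation | Ceiling | Rounding.

Definition quant {R : realType} (q : quantizer) (x : R) : R :=
  match q with
  | Truncation => (Num.floor x)%:~R
  | Ceiling => (Num.ceil x)%:~R
  | Rounding => (Num.floor (x + 2^-1))%:~R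
  end.

Definition roundD {R : realType} (D x : R) : R :=
  D * (Num.max 0 (Num.floor (x / D + 2^-1)))%:~R.

Definition boundary_set {R : realType} (D : R) : set R :=
  [set x | exists k : nat, x = k%:R * D + D / 2].

Definition undirected_graph n (E : rel 'I_n) :=
  (forall i j, E i j = E j i) /\ (forall i, ~~ E i i).
Definition connected_graph n (E : rel 'I_n) := forall i j, connect E i j.

Definition weight_matrix_ok {R : realType} n (E : rel 'I_n) (W : 'M[R]_n) :=
  [/\ W^T = W,
      (forall i j, 0 <= W i j) /\ (forall i, \sum_(j < n) W i j = 1),
      (forall i j, i != j -> ~~ E i j -> W i j = 0),
      (forall i, W i i > 2^-1) &
      (forall i j, E i j -> and (exists q : rat, W i j = ratr q) (0 < W i j < 1))].

Definition weight_t {R : realType} n (W : 'M[R]_n) (Et : {set 'I_n * 'I_n}) : 'M[R]_n :=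
  \matrix_(i, j)
    if i == j then 1 - \sum_(k | k != i) (if (i, k) \in Et then W i k else 0)
    else (if (i, j) \in Et then W i j else 0).

(* z(t) = (1/t) sum_{tau = 1}^t x(tau), where xs k stands for x(k+1). *)
Definition smean {R : realType} (xs : nat -> R) (t : nat) : R :=
  (t%:R)^-1 * \sum_(k < t) xs k.

(* y(s+1) in the paper's indexing (s = 0,1,...):
   G s stands for E(s+1), xs i k for x_i(k+1), y1 = y(1). *)
Fixpoint ytraj {R : realType} n (q : quantizer) (D : R) (W : 'M[R]_n)
    (G : nat -> {set 'I_n * 'I_n}) (xs : 'I_n -> nat -> R) (y1 : 'cV[R]_n)
    (s : nat) : 'cV[R]_n :=
  match s with
  | 0 => y1
  | s'.+1 =>
      let y := ytraj q D W G xs y1 s' in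
      weight_t W (G s') *m map_mx (quant q) y + y - map_mx (quant q) y
      + \col_i (roundD D (smean (xs i) s'.+2) - roundD D (smean (xs i) s'.+1))
  end.

(* history (N(1),...,N(t)) of the random graphs, G s = N(s+1) *)
Definition history {T : Type} n (G : nat -> T -> {set 'I_n * 'I_n}) (t : nat)
  (w : T) : seq {set 'I_n * 'I_n} := map (fun s => G s w) (iota 0 t).

Definition mutually_independent {d} {T : measurableType d} {R : realType}
  (P : probability T R) (X : nat -> T -> R) :=
  forall (N : nat) (B : nat -> set R), (forall k, measurable (B k)) ->
    P (\bigcap_(k in [set k | (k < N)%N]) (X k @^-1` B k)) =
    (\prod_(k < N) P (X k @^-1` B k))%E.

Definition identically_distributed {d} {T : measurableType d} {R : realType}
  (P : probability T R) (X Y : T -> R) :=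
  forall B : set R, measurable B -> P (X @^-1` B) = P (Y @^-1` B).

(* Main.v *)
Require Import Defs.
From HB Require Import structures.
From mathcomp Require Import all_boot all_order all_algebra.
From mathcomp Require Import all_classical all_reals all_analysis.
From mathcomp Require Import ring lra.
Set Implicit Arguments. Unset Strict Implicit. Unset Printing Implicit Defensive.
Import Order.TTheory GRing.Theory Num.Theory.
Import numFieldNormedType.Exports.
Local Open Scope classical_set_scope.
Local Open Scope ring_scope.
Section stair.
Variable R : realType.
Lemma b2R_le1 (c : bool) : ((c : nat)%:R : R) <= 1. Proof. by case: c. Qed.
Lemma b2R_ge0 (c : bool) : 0 <= ((c : nat)%:R : R). Proof. by case: c. Qed.
Definition stS (b e x : R) n := \sum_(l < n) ((b + (l.+1)%:R * e <= x)%R%:R : R).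

Lemma stS_S (b e x : R) n : stS b e x n.+1 = stS b e x n + ((b + n.+1%:R * e <= x)%R%:R : R).
Proof. by rewrite /stS big_ord_recr. Qed.

Lemma stS_ge0 (b e x : R) n : 0 <= stS b e x n.
Proof. by apply: sumr_ge0 => i _; exact: b2R_ge0. Qed.

Lemma stS_le (b e x : R) n : stS b e x n <= n%:R.
Proof.
elim: n => [|n IH]; first by rewrite /stS big_ord0.
by rewrite stS_S -natr1 lerD // b2R_le1.
Qed.

Lemma stS_full (b e x : R) n : 0 < e -> b + n%:R * e <= x -> stS b e x n = n%:R.
Proof.
move=> e0; elim: n => [|n IH] h; first by rewrite /stS big_ord0.
rewrite stS_S IH; last by apply: le_trans h; rewrite lerD2l ler_pM2r // ler_nat.
by rewrite h -natr1.
Qed.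

Lemma stair1 (b e x : R) n : 0 < e -> b <= x -> b + e * stS b e x n <= x.
Proof.
move=> e0 bx; elim: n => [|n IH]; first by rewrite /stS big_ord0 mulr0 addr0.
rewrite stS_S; have [h|h] := boolP (b + n.+1%:R * e <= x); last first.
  by rewrite mulr0n addr0.
rewrite mulr1n.
have h2 := stS_le b e x n.
have h3 : e * stS b e x n <= e * n%:R by rewrite ler_pM2l.
rewrite -natr1 in h; lra.
Qed.

Lemma stair2 (b e x : R) n : 0 < e -> x <= b + n%:R * e -> x <= b + e + e * stS b e x n.
Proof.
move=> e0; elim: n => [|n IH] h.
  by rewrite /stS big_ord0 mulr0 addr0 mul0r addr0 in h *; lra.
have mono : stS b e x n <= stS b e x n.+1 by rewrite stS_S lerDl b2R_ge0.
have mono2 : e * stS b e x n <= e * stS b e x n.+1 by rewrite ler_pM2l.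
have [h1|h1] := leP x (b + n%:R * e).
  have := IH h1; lra.
have Sn := stS_full e0 (ltW h1).
rewrite Sn in mono2; rewrite -natr1 in h; lra.
Qed.
End stair.
Lemma rho_aux (R : realType) (pi eta lam e1 e2 : R) :
  0 <= pi -> pi <= 1 -> 0 < eta -> 0 < lam -> lam < 1 ->
  lam * (1 + eta) = eta / 2 ->
  e1 * (1 - lam) <= 1 -> 1 + lam * (pi + eta) <= e2 ->
  e1 * pi + (1 - pi) < e2.
Proof.
move=> p0 p1 e0 l0 l1 le e1b e2b.
have key : lam * (pi + eta) < eta.
  have : lam * pi <= lam * 1 by rewrite ler_pM2l.
  nra.
have e1pi : e1 * pi * (1 - lam) <= pi by nra.
nra.
Qed.

Section freq.
Context d (T : measurableType d) (R : realType) (P : probability T R).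
Variables (f : nat -> T -> R) (B : set R).
Hypothesis mB : measurable B.
Hypothesis mf : forall k, measurable_fun setT (f k).
Hypothesis indep : forall (N : nat) (C : nat -> set R), (forall k, measurable (C k)) ->
    P (\bigcap_(k in [set k | (k < N)%N]) (f k @^-1` C k)) =
    (\prod_(k < N) P (f k @^-1` C k))%E.
Variable pi : R.
Hypothesis PB : forall k, P (f k @^-1` B) = pi%:E.
Variable eta : R.
Hypothesis eta_gt0 : 0 < eta.

Lemma mpre k C : measurable C -> measurable (f k @^-1` C).
Proof. by move=> mC; rewrite -[_ @^-1` _]setTI; apply: mf. Qed.

Lemma PBc k : P (f k @^-1` ~` B) = (1 - pi)%:E.
Proof. rewrite -preimage_setC probability_setC; last exact: mpre. by rewrite PB EFinB. Qed.

Lemma pi_ge0 : 0 <= pi.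
Proof. by rewrite -lee_fin -(PB 0); exact: measure_ge0. Qed.
Lemma pi_le1 : pi <= 1.
Proof. by rewrite -lee_fin -(PB 0); exact: probability_le1 (mpre 0 mB). Qed.

Definition sel t (g : {ffun 'I_t -> bool}) (k : nat) : set R :=
  if insub k is Some i then (if g i then B else ~` B) else setT.

Lemma selE t (g : {ffun 'I_t -> bool}) (i : 'I_t) : sel g i = if g i then B else ~` B.
Proof. by rewrite /sel valK. Qed.

Lemma msel t g k : measurable (@sel t g k).
Proof.
rewrite /sel; case: insub => [i|] //; case: (g i) => //; exact: measurableC.
Qed.

Definition atom t (g : {ffun 'I_t -> bool}) :=
  \bigcap_(k in [set k | (k < t)%N]) (f k @^-1` sel g k).

Lemma matom t g : measurable (@atom t g).
Proof. by apply: bigcap_measurableType => k _; apply: mpre; apply: msel. Qed.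

Lemma Patom t g : P (@atom t g) = (\prod_(i < t) (if g i then pi else 1 - pi))%:E.
Proof.
rewrite /atom indep; last by move=> k; apply: msel.
rewrite -prodEFin; apply: eq_bigr => i _; rewrite selE.
by case: (g i); [exact: PB|exact: PBc].
Qed.

Definition cntg t (g : {ffun 'I_t -> bool}) : R := \sum_(i < t) (g i)%:R.
Definition pat t w : {ffun 'I_t -> bool} := [ffun i : 'I_t => f i w \in B].
Definition cnt t w : R := \sum_(k < t) \1_B (f k w).

Lemma cnt_pat t w : cnt t w = cntg (pat t w).
Proof. by apply: eq_bigr => i _; rewrite ffunE indicE. Qed.

Lemma atom_pat t w : atom (pat t w) w.
Proof.
move=> k /= kt; rewrite /sel insubT /= ffunE.
by case: ifPn => [/set_mem|/negP h /mem_set].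
Qed.

Definition good t (g : {ffun 'I_t -> bool}) := (pi + eta) * t%:R <= cntg g.
Definition U t := \big[setU/set0]_(g : {ffun 'I_t -> bool} | good g) atom g.

Lemma mU t : measurable (U t).
Proof. by apply: bigsetU_measurable => g _; exact: matom. Qed.

Lemma subadd_seq (I : Type) (s : seq I) (p : pred I) (F : I -> set T) :
  (forall i, measurable (F i)) ->
  (P (\big[setU/set0]_(i <- s | p i) F i) <= \sum_(i <- s | p i) P (F i))%E.
Proof.
move=> mF; elim: s => [|i s IH]; first by rewrite !big_nil measure0.
rewrite !big_cons; case: (p i) => //.
apply: le_trans (measureU2 _ (mF i) (bigsetU_measurable _ _)) _ => //.
exact: leeD2l.
Qed.


Definition lam : R := eta / (2 * (1 + eta)).
Definition rho : R := expR (- lam * (pi + eta)) * (expR lam * pi + (1 - pi)).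

Lemma lam_gt0 : 0 < lam.
Proof. by rewrite /lam divr_gt0 // mulr_gt0 // addr_gt0. Qed.

Lemma rho_ge0 : 0 <= rho.
Proof.
rewrite /rho mulr_ge0 ?expR_ge0 // addr_ge0 ?mulr_ge0 ?expR_ge0 ?pi_ge0 //.
by rewrite subr_ge0 pi_le1.
Qed.

Lemma rho_lt1 : rho < 1.
Proof.
have l0 := lam_gt0; have p0 := pi_ge0; have p1 := pi_le1.
have lam_eta : lam * (1 + eta) = eta / 2.
  by rewrite /lam mulrAC -mulf_div divff ?mulr1 // gt_eqF // addr_gt0.
have lam_lt1 : lam < 1.
  have h1 : 0 < 1 + eta by rewrite addr_gt0.
  by rewrite -(ltr_pM2r h1) mul1r lam_eta; lra.
set e1 := expR lam.
have e1b : e1 * (1 - lam) <= 1.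
  have := expR_ge1Dx (- lam); rewrite expRN => h.
  have e1p : 0 < e1 by rewrite expR_gt0.
  by rewrite -(ler_pM2l e1p) mulfV ?gt_eqF in h.
have e2b := expR_ge1Dx (lam * (pi + eta)).
set e2 := expR (lam * (pi + eta)) in e2b.
have e2p : 0 < e2 by rewrite expR_gt0.
have -> : rho = (e1 * pi + (1 - pi)) / e2.
  by rewrite /rho mulNr expRN mulrC.
rewrite ltr_pdivrMr // mul1r.
exact: (rho_aux p0 p1 eta_gt0 l0 lam_lt1 lam_eta e1b e2b).
Qed.

Lemma pr_ge0 t (g : {ffun 'I_t -> bool}) : 0 <= \prod_(i < t) (if g i then pi else 1 - pi).
Proof.
apply: prodr_ge0 => i _; case: (g i); first exact: pi_ge0.
by rewrite subr_ge0 pi_le1.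
Qed.

Lemma sum_prod_bool t (a b : R) :
  \sum_(g : {ffun 'I_t -> bool}) \prod_(i < t) (if g i then a else b) = (a + b) ^+ t.
Proof.
rewrite -(bigA_distr_bigA (fun (i : 'I_t) (x : bool) => if x then a else b)) /=.
under eq_bigr do rewrite big_bool /=.
by rewrite prodr_const card_ord.
Qed.

Lemma PU t : (P (U t) <= (rho ^+ t)%:E)%E.
Proof.
rewrite /U; apply: le_trans (@subadd_seq _ (index_enum {ffun 'I_t -> bool}) (@good t) (@atom t) (@matom t)) _.
under eq_bigr do rewrite Patom.
rewrite sumEFin lee_fin.
set c := lam * ((pi + eta) * t%:R).
apply: (@le_trans _ _ (\sum_(g : {ffun 'I_t -> bool})
   expR (- c) * (expR (lam * cntg g) * \prod_(i < t) (if g i then pi else 1 - pi)))).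
  rewrite big_mkcond /=; apply: ler_sum => g _; case: ifP => gg.
    rewrite mulrA -expRD -{1}[X in X <= _]mul1r ler_wpM2r ?pr_ge0 //.
    apply: le_trans (expR_ge1Dx _); rewrite lerDl.
    by rewrite addrC subr_ge0 /c ler_pM2l ?lam_gt0.
  by rewrite mulr_ge0 ?expR_ge0 // mulr_ge0 ?expR_ge0 ?pr_ge0.
have E1 : forall g : {ffun 'I_t -> bool},
    expR (lam * cntg g) * \prod_(i < t) (if g i then pi else 1 - pi) =
    \prod_(i < t) (if g i then expR lam * pi else 1 - pi).
  move=> g; rewrite /cntg mulr_sumr expR_sum -big_split /=.
  by apply: eq_bigr => i _; case: (g i); rewrite /= ?mulr1n ?mulr0n ?mulr1 ?mulr0 ?expR0 ?mul1r.
under eq_bigr do rewrite E1.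
rewrite -mulr_sumr sum_prod_bool /rho exprMn ler_wpM2r //.
  by rewrite exprn_ge0 // addr_ge0 ?mulr_ge0 ?expR_ge0 ?pi_ge0 // subr_ge0 pi_le1.
by rewrite -expRM_natr /c !mulNr mulrA.
Qed.

Lemma sumU_fin : (\sum_(0 <= t <oo) P (U t) < +oo)%E.
Proof.
apply: le_lt_trans (@lee_nneseries _ (fun t => P (U t)) (fun t => (rho ^+ t)%:E) xpredT 0 _ _) _.
- by move=> i _ _; exact: measure_ge0.
- by move=> n _; exact: PU.
have -> : (fun n => \sum_(0 <= k < n) ((rho ^+ k)%:E)%E) = EFin \o series (geometric 1 rho).
  apply/funext => n /=; rewrite sumEFin /series /=; congr (_%:E).
  by apply: eq_bigr => k _; rewrite /geometric /= mul1r.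
rewrite EFin_lim ?ltry //; apply: is_cvg_geometric_series.
by rewrite ger0_norm ?rho_ge0 // rho_lt1.
Qed.

Lemma freq_ae : {ae P, forall w, exists t0, forall t, (t0 <= t)%N -> cnt t w < (pi + eta) * t%:R}.
Proof.
exists (lim_sup_set U); split.
- by apply: bigcapT_measurable => n; apply: bigcup_measurable => k _; exact: mU.
- by apply: lim_sup_set_cvg0 => //; [exact: mU| exact: sumU_fin].
move=> w /= Hw n _; apply: contrapT => Hn; apply: Hw; exists n => t nt.
rewrite ltNge; apply/negP => ct; apply: Hn; exists t => //.
rewrite /U (bigD1 (pat t w)) /=; last by rewrite /good -cnt_pat.
by left; exact: atom_pat.
Qed.

End freq.
Section lower.
Context d (T : measurableType d) (R : realType) (P : probability T R).
Variables (f : nat -> T -> R) (X : T -> R) (K a : R).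
Hypothesis mX : measurable_fun setT X.
Hypothesis mf : forall k, measurable_fun setT (f k).
Hypothesis XK : forall w, `|X w| <= K.
Hypothesis indep : forall (N : nat) (C : nat -> set R), (forall k, measurable (C k)) ->
    P (\bigcap_(k in [set k | (k < N)%N]) (f k @^-1` C k)) =
    (\prod_(k < N) P (f k @^-1` C k))%E.
Hypothesis idd : forall k (C : set R), measurable C -> P (f k @^-1` C) = P (X @^-1` C).
Hypothesis amu : a < fine (\int[P]_w (X w)%:E)%E.

Let mu : R := fine (\int[P]_w (X w)%:E)%E.
Let K' : R := `|K| + 1.
Let dl : R := mu - a.
Let L : nat := (Num.truncn (4 * K' / dl)).+1.
Let eps : R := 2 * K' / L%:R.
Let eta : R := dl / (8 * K').
Let c (l : nat) : R := - K' + (l.+1)%:R * eps.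
Let Bl (l : nat) : set R := `]-oo, c l[%classic.
Let pil (l : nat) : R := fine (P (X @^-1` Bl l)).
Let SP : R := \sum_(l < L) pil l.

Let K'_gt0 : 0 < K'. Proof. by rewrite /K' ltr_pwDr. Qed.
Let dl_gt0 : 0 < dl. Proof. by rewrite /dl subr_gt0. Qed.
Let L_gt0 : 0 < (L%:R : R). Proof. by rewrite ltr0n. Qed.
Let eps_gt0 : 0 < eps. Proof. by rewrite /eps divr_gt0 // mulr_gt0. Qed.
Let epsL : L%:R * eps = 2 * K'.
Proof. by rewrite /eps mulrCA mulfV ?mulr1 // gt_eqF. Qed.
Let eps_le : eps <= dl / 2.
Proof.
have h := truncnS_gt (4 * K' / dl); rewrite -/L in h.
rewrite /eps ler_pdivrMr //.
rewrite ltr_pdivrMr // in h; nra.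
Qed.
Let eta_gt0 : 0 < eta. Proof. by rewrite /eta divr_gt0 // mulr_gt0. Qed.
Let epsLeta : L%:R * eps * eta = dl / 4.
Proof. rewrite epsL /eta; field; by rewrite gt_eqF. Qed.
Let XK' w : - K' <= X w <= K'.
Proof. have := XK w; rewrite ler_norml /K' => /andP[h1 h2]; have := ler_norm K; lra. Qed.

Let mBl l : measurable (Bl l). Proof. exact: measurable_itv. Qed.

Let inBl l x : (x \in Bl l) = (x < c l).
Proof. by apply/idP/idP; rewrite /Bl in_setE /= in_itv /=. Qed.

Let pilE l : P (X @^-1` Bl l) = (pil l)%:E.
Proof. by rewrite /pil fineK // fin_num_measure //; rewrite -[_ @^-1` _]setTI; apply: mX. Qed.

Let mpreX C : measurable C -> measurable (X @^-1` C).
Proof. by move=> mC; rewrite -[_ @^-1` _]setTI; apply: mX. Qed.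

Let intX : P.-integrable setT (EFin \o X).
Proof.
apply: (@measurable_bounded_integrable _ _ _ P X setT measurableT).
- by apply: (le_lt_trans (probability_le1 P measurableT)); exact: ltry.
- exact: mX.
exists K; split; first exact: num_real.
by move=> M KM w _ /=; apply: le_trans (XK w) (ltW KM).
Qed.

Let muE : mu%:E = (\int[P]_w (X w)%:E)%E.
Proof. by rewrite /mu fineK // integrable_fin_num. Qed.

Let indC l x : \1_(~` Bl l) x = ((c l <= x)%R%:R : R).
Proof.
rewrite indicE; have [h|h] := leP (c l) x.
  have nb : ~ Bl l x by move=> /mem_set; rewrite inBl ltNge h.
  by rewrite mem_set.
have b : Bl l x by apply/set_mem; rewrite inBl.
by rewrite memNset // => /(_ b).
Qed.

Let PC l : (P : {measure set T -> \bar R}) (X @^-1` ~` Bl l) = (1 - pil l)%:E.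
Proof.
have h := probability_setC P (mpreX (mBl l)); rewrite preimage_setC in h.
by apply: (eq_trans h); rewrite pilE EFinB.
Qed.

Lemma expect_bound : mu <= K' + eps - eps * SP.
Proof.
pose psi w := ((- K' + eps)%:E + \sum_(l < L) (eps%:E * (\1_(X @^-1` ~` Bl l) w)%:E))%E.
have intpsi : P.-integrable setT psi.
  apply: integrableD => //; first exact: finite_measure_integrable_cst.
  apply: integrable_sum => // l _; apply: (integrableZl measurableT).
  by apply: integrable_indic; apply: mpreX; apply: measurableC.
have le1 : (mu%:E <= \int[P]_w psi w)%E.
  rewrite muE; apply: le_integral => // w _.
  rewrite /psi sumEFin -EFinD lee_fin.
  have := @stair2 R (- K') eps (X w) L eps_gt0.
  rewrite /stS -/K' -mulr_sumr.
  have -> : \sum_(l < L) \1_(X @^-1` ~` Bl l) w = \sum_(l < L) ((- K' + (l.+1)%:R * eps <= X w)%R%:R : R).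
    by apply: eq_bigr => l _; rewrite -(indC l (X w)).
  move=> h; apply: h.
  by rewrite epsL; have := XK' w; lra.
have E2 : (\int[P]_w psi w = (- K' + eps)%:E + \sum_(l < L) (eps%:E * (1 - pil l)%:E))%E.
  rewrite integralD //; last 2 first.
  - exact: finite_measure_integrable_cst.
  - apply: integrable_sum => // l _; apply: (integrableZl measurableT).
    by apply: integrable_indic; apply: mpreX; apply: measurableC.
  have PT : (P : {measure set T -> \bar R}) [set: T] = 1%E by exact: probability_setT.
  rewrite integral_cst // PT mule1 integral_sum //; last first.
    move=> l; apply: (integrableZl measurableT).
    by apply: integrable_indic; apply: mpreX; apply: measurableC.
  congr (_ + _)%E; apply: eq_bigr => l _.
  rewrite integralZl //; last by apply: integrable_indic; apply: mpreX; apply: measurableC.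
  by rewrite integral_indic ?setIT ?PC //; apply: mpreX; apply: measurableC.
move: le1; rewrite E2 sumEFin -EFinD lee_fin -mulr_sumr sumrB sumr_const card_ord.
rewrite -/SP mulrBr mulrC epsL; lra.
Qed.

Let indB l x : \1_(Bl l) x = 1 - ((c l <= x)%R%:R : R).
Proof.
rewrite indicE; have [h|h] := leP (c l) x.
  have nb : ~ Bl l x by move=> /mem_set; rewrite inBl ltNge h.
  by rewrite memNset // subrr.
have b : Bl l x by apply/set_mem; rewrite inBl.
by rewrite mem_set // subr0.
Qed.

Let stS_ind x : stS (- K') eps x L = L%:R - \sum_(l < L) \1_(Bl l) x.
Proof.
under [X in _ = _ - X]eq_bigr do rewrite indB.
by rewrite sumrB sumr_const card_ord opprB addrCA subrr addr0.
Qed.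

Lemma lower_ae : {ae P, forall w, exists t0, forall t, (t0 <= t)%N ->
   a < smean (fun k => f k w) t.+1}.
Proof.
have H1 : {ae P, forall w, forall l : 'I_L, exists t0, forall t, (t0 <= t)%N ->
    cnt f (Bl l) t w < (pil l + eta) * t%:R}.
  apply: filter_forall => l.
  exact: (freq_ae (mBl l) mf indep (fun k => eq_trans (idd k (mBl l)) (pilE l)) eta_gt0).
have H2 : {ae P, forall w, forall k, - K' <= f k w}.
  apply: ae_foralln => k; exists (f k @^-1` `]-oo, - K'[); split.
  - by rewrite -[_ @^-1` _]setTI; apply: mf => //; exact: measurable_itv.
  - apply: (eq_trans (idd k (measurable_itv `]-oo, - K'[))).
    have -> : X @^-1` `]-oo, - K'[ = set0.
      apply/seteqP; split => // w /=; rewrite in_itv /= => h.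
      by have := XK' w; lra.
    exact: measure0.
  - by move=> w /= h; rewrite in_itv /= ltNge; apply/negP.
move: H1 H2; apply: filterS2 => w h1 h2.
have [t0s Ht0] := fin_all_exists h1.
exists (\max_(l < L) t0s l) => t tT.
set N := t.+1.
have Npos : 0 < (N%:R : R) by rewrite ltr0n.
have hc : forall l : 'I_L, cnt f (Bl l) N w <= (pil l + eta) * N%:R.
  move=> l; apply: ltW; apply: Ht0.
  by apply: leq_trans (leq_bigmax l) (leq_trans tT (leqnSn t)).
have s1 : \sum_(k < N) (K' - eps * \sum_(l < L) \1_(Bl l) (f k w)) <= \sum_(k < N) f k w.
  apply: ler_sum => k _.
  have := @stair1 R (- K') eps (f k w) L eps_gt0 (h2 k).
  rewrite stS_ind mulrBr mulrC epsL; lra.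
have s2 : \sum_(k < N) (K' - eps * \sum_(l < L) \1_(Bl l) (f k w)) =
    N%:R * K' - eps * \sum_(l < L) cnt f (Bl l) N w.
  rewrite sumrB sumr_const card_ord -mulr_sumr exchange_big /= mulr_natl.
  by [].
have s3 : \sum_(l < L) cnt f (Bl l) N w <= (SP + L%:R * eta) * N%:R.
  apply: le_trans (ler_sum _ (fun l _ => hc l)) _.
  by rewrite -mulr_suml big_split /= sumr_const card_ord /SP mulr_natl.
have key : a < K' - eps * SP - L%:R * eps * eta.
  have := expect_bound; rewrite epsLeta -/mu; have := eps_le; have := dl_gt0; rewrite /dl; lra.
have key2 : N%:R * a < N%:R * (K' - eps * SP - L%:R * eps * eta) by rewrite ltr_pM2l.
have s3' : eps * \sum_(l < L) cnt f (Bl l) N w <= eps * ((SP + L%:R * eta) * N%:R).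
  by rewrite ler_pM2l.
rewrite /smean ltr_pdivlMl //.
lra.
Qed.

End lower.
Lemma bounded_integrable d (T : measurableType d) (R : realType) (P : probability T R)
  (X : T -> R) (K : R) : measurable_fun setT X -> (forall w, `|X w| <= K) ->
  P.-integrable setT (EFin \o X).
Proof.
move=> mX XK; apply: (@measurable_bounded_integrable _ _ _ P X setT measurableT).
- by apply: (le_lt_trans (probability_le1 P measurableT)); exact: ltry.
- exact: mX.
exists K; split; first exact: num_real.
by move=> M KM w _ /=; apply: le_trans (XK w) (ltW KM).
Qed.

Lemma mopp (R : realType) (C : set R) : measurable C -> measurable ((fun x : R => - x) @^-1` C).
Proof.
move=> mC; have := (@measurable_realfun.measurable_funN _ _ R setT (fun x : R => x) (@measurable_id _ _ setT)) measurableT C mC.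
by rewrite setTI.
Qed.

Lemma upper_ae d (T : measurableType d) (R : realType) (P : probability T R)
  (f : nat -> T -> R) (X : T -> R) (K b : R) :
  measurable_fun setT X -> (forall k, measurable_fun setT (f k)) ->
  (forall w, `|X w| <= K) ->
  (forall (N : nat) (C : nat -> set R), (forall k, measurable (C k)) ->
    P (\bigcap_(k in [set k | (k < N)%N]) (f k @^-1` C k)) =
    (\prod_(k < N) P (f k @^-1` C k))%E) ->
  (forall k (C : set R), measurable C -> P (f k @^-1` C) = P (X @^-1` C)) ->
  fine (\int[P]_w (X w)%:E)%E < b ->
  {ae P, forall w, exists t0, forall t, (t0 <= t)%N -> smean (fun k => f k w) t.+1 < b}.
Proof.
move=> mX mf XK indep idd bmu.
have := @lower_ae d T R P (fun k w => - f k w) (fun w => - X w) K (- b).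
case.
- exact: measurable_realfun.measurable_funN.
- by move=> k; exact: measurable_realfun.measurable_funN.
- by move=> w; rewrite normrN.
- by move=> N C mC; exact: (indep N (fun k => (fun x => - x) @^-1` C k) (fun k => mopp (mC k))).
- by move=> k C mC; exact: (idd k _ (mopp mC)).
- have intX := bounded_integrable P mX XK.
  have -> : (\int[P]_w (- X w)%:E = - \int[P]_w (X w)%:E)%E.
    by rewrite -integralN //; exact: integrable_add_def.
  by rewrite fineN ltrN2.
move=> N [mN PN sub]; exists N; split => // w /= h; apply: sub => /= -[t0 Ht]; apply: h.
exists t0 => t tt; have := Ht t tt.
rewrite /smean; under eq_bigr do rewrite -/(- f _ w).
by rewrite sumrN mulrN ltrN2.
Qed.
Section det.
Variable R : realType.

Definition Qi (q : quantizer) (x : R) : int :=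
  match q with
  | Truncation => Num.floor x
  | Ceiling => Num.ceil x
  | Rounding => Num.floor (x + 2^-1)
  end.

Lemma quantE q (x : R) : quant q x = (Qi q x)%:~R.
Proof. by case: q. Qed.

Lemma quant_near q (x : R) : `|x - quant q x| <= 1.
Proof.
rewrite quantE ler_norml; case: q => /=.
- by have := floor_itv x; rewrite intrD => /andP[h1 h2]; apply/andP; split; lra.
- by have := ceil_itv x; rewrite intrB => /andP[h1 h2]; apply/andP; split; lra.
- by have := floor_itv (x + 2^-1); rewrite intrD => /andP[h1 h2]; apply/andP; split; lra.
Qed.

Lemma floor_range (lo hi : int) (x : R) : lo%:~R <= x -> x < hi%:~R + 1 ->
  (lo <= Num.floor x) && (Num.floor x <= hi).
Proof.
move=> h1 h2; rewrite floor_ge_int h1 /= -ltzD1 floor_lt_int intrD.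
by [].
Qed.

Lemma quant_step q (lo hi : int) (c y : R) : lo%:~R <= c <= hi%:~R ->
  (lo <= Qi q (c + (y - quant q y))) && (Qi q (c + (y - quant q y)) <= hi).
Proof.
move=> /andP[cl ch]; rewrite quantE; case: q => /=.
- have := floor_itv y; rewrite intrD => /andP[h1 h2].
  apply: floor_range; lra.
- have := ceil_itv y; rewrite intrB => /andP[h1 h2].
  rewrite ceil_le_int -ltzD1 -ltrBlDr ceil_gt_int intrB.
  apply/andP; split; lra.
- have := floor_itv (y + 2^-1); rewrite intrD => /andP[h1 h2].
  apply: floor_range; lra.
Qed.
Section weights.
Variables (n : nat) (E : rel 'I_n) (W : 'M[R]_n).
Hypothesis Wok : weight_matrix_ok E W.

Lemma W_ge0 i j : 0 <= W i j.
Proof. by case: Wok => _ [W0 _]. Qed.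

Lemma W_sum i : \sum_j W i j = 1.
Proof. by case: Wok => _ [_ W1]. Qed.

Lemma wt_off (Et : {set 'I_n * 'I_n}) i j : i != j ->
  weight_t W Et i j = if (i, j) \in Et then W i j else 0.
Proof. by move=> ij; rewrite mxE (negbTE ij). Qed.

Lemma wt_ge0 (Et : {set 'I_n * 'I_n}) i j : 0 <= weight_t W Et i j.
Proof.
have [<-|ij] := eqVneq i j; last first.
  by rewrite wt_off //; case: ifP => // _; exact: W_ge0.
rewrite mxE eqxx subr_ge0.
have := W_sum i; rewrite (bigD1 i) //= => h.
apply: le_trans (_ : \sum_(k | k != i) W i k <= 1).
  by apply: ler_sum => k _; case: ifP => // _; exact: W_ge0.
by rewrite -h lerDr W_ge0.
Qed.

Lemma wt_sum (Et : {set 'I_n * 'I_n}) i : \sum_j weight_t W Et i j = 1.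
Proof.
rewrite (bigD1 i) //= mxE eqxx.
rewrite [X in _ + X](eq_bigr (fun k => if (i, k) \in Et then W i k else 0)); first by rewrite subrK.
by move=> k ki; rewrite wt_off // eq_sym.
Qed.

Lemma denom_ex : exists M : nat, (0 < M)%N /\
  forall i j, i != j -> M%:R * W i j \is a Num.int.
Proof.
have H : forall p : 'I_n * 'I_n, exists dd : nat, (0 < dd)%N /\
    (p.1 != p.2 -> dd%:R * W p.1 p.2 \is a Num.int).
  move=> [i j] /=.
  case: Wok => _ _ Wz _ Wq.
  have [eij|neij] := boolP (E i j); last first.
    by exists 1%N; split => // ij; rewrite Wz // mulr0 int_num0.
  have [[r Wr] _] := Wq i j eij.
  exists `|denq r|%N; split; first by rewrite absz_gt0 denq_neq0.
  move=> _; rewrite Wr /ratr.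
  have -> : (`|denq r|%N%:R : R) = (denq r)%:~R.
    by rewrite -[in RHS](gez0_abs (ltW (denq_gt0 r))) -pmulrn.
  rewrite mulrCA mulfV ?mulr1 ?intr_int // intr_eq0 denq_neq0 //.
have [dd Hd] := fin_all_exists H.
exists (\prod_p dd p); split; first by apply: prodn_gt0 => p; case: (Hd p).
move=> i j ij; rewrite (bigD1 (i, j)) //= natrM mulrAC mulrC.
apply: rpredM; first exact: natr_int.
by case: (Hd (i, j)) => _ /(_ ij).
Qed.
End weights.

Lemma conv_bound n (w : 'I_n -> R) (v : 'I_n -> int) (lo hi : int) :
  (forall j, 0 <= w j) -> \sum_j w j = 1 -> (forall j, (lo <= v j) && (v j <= hi)) ->
  lo%:~R <= \sum_j w j * (v j)%:~R <= hi%:~R.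
Proof.
move=> w0 w1 hv; apply/andP; split.
- have -> : lo%:~R = \sum_j w j * lo%:~R :> R by rewrite -mulr_suml w1 mul1r.
  apply: ler_sum => j _.
  by apply: ler_wpM2l => //; case/andP: (hv j) => h _; rewrite ler_int.
- have -> : hi%:~R = \sum_j w j * hi%:~R :> R by rewrite -mulr_suml w1 mul1r.
  apply: ler_sum => j _.
  by apply: ler_wpM2l => //; case/andP: (hv j) => _ h; rewrite ler_int.
Qed.

Lemma det_finite n (E : rel 'I_n) (W : 'M[R]_n) (q : quantizer) (D : R)
  (G : nat -> {set 'I_n * 'I_n}) (xs : 'I_n -> nat -> R) (y1 : 'cV[R]_n) (T0 : nat) :
  weight_matrix_ok E W ->
  (forall i t, (T0 <= t)%N -> roundD D (smean (xs i) t.+1) = roundD D (smean (xs i) T0.+1)) ->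
  exists S : seq R, forall t i, ytraj q D W G xs y1 t i ord0 \in S.
Proof.
move=> Wok Hc.
set y := ytraj q D W G xs y1.
have ystep s i : y s.+1 i ord0 = \sum_j weight_t W (G s) i j * quant q (y s j ord0)
   + (y s i ord0 - quant q (y s i ord0))
   + (roundD D (smean (xs i) s.+2) - roundD D (smean (xs i) s.+1)).
  rewrite /y /= !mxE; congr (_ + _); rewrite -addrA; congr (_ + _).
  by apply: eq_bigr => j _; congr (_ * _); rewrite mxE.
have ystep0 s i : (T0 <= s)%N -> y s.+1 i ord0 =
    \sum_j weight_t W (G s) i j * quant q (y s j ord0) + (y s i ord0 - quant q (y s i ord0)).
  move=> Ts; rewrite ystep (Hc i s.+1) ?(Hc i s) ?subrr ?addr0 //; exact: leqW.
pose B : nat := (\sum_j `|Qi q (y T0 j ord0)|%N)%N.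
have base j : (- (B%:Z) <= Qi q (y T0 j ord0)) && (Qi q (y T0 j ord0) <= B%:Z).
  rewrite -ler_norml -abszE lez_nat /B (bigD1 j) //=; exact: leq_addr.
have inv t : (T0 <= t)%N -> forall j, (- (B%:Z) <= Qi q (y t j ord0)) && (Qi q (y t j ord0) <= B%:Z).
  elim: t => [|t IH] Tt j.
    by move: Tt; rewrite leqn0 => /eqP T00; subst T0; exact: base.
  move: Tt; rewrite leq_eqVlt => /orP[/eqP <-|Tt]; first exact: base.
  rewrite ystep0 //; apply: quant_step.
  under eq_bigr do rewrite quantE.
  apply: conv_bound; [by move=> k; apply: (wt_ge0 Wok) | exact: wt_sum | by move=> k; apply: IH].
have [M [M0 HM]] := denom_ex Wok.
have Mpos : 0 < (M%:R : R) by rewrite ltr0n.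
have lat t : (T0 <= t)%N -> forall i, M%:R * (y t i ord0 - y T0 i ord0) \is a Num.int.
  elim: t => [|t IH] Tt i.
    by move: Tt; rewrite leqn0 => /eqP T00; subst T0; rewrite subrr mulr0 int_num0.
  move: Tt; rewrite leq_eqVlt => /orP[/eqP <-|Tt]; first by rewrite subrr mulr0 int_num0.
  have -> : M%:R * (y t.+1 i ord0 - y T0 i ord0) =
      M%:R * (y t i ord0 - y T0 i ord0) + M%:R * (y t.+1 i ord0 - y t i ord0) by ring.
  apply: rpredD; first exact: IH.
  have inc : y t.+1 i ord0 - y t i ord0 = \sum_j weight_t W (G t) i j *
      (quant q (y t j ord0) - quant q (y t i ord0)).
    rewrite ystep0 // [RHS](eq_bigr (fun j => weight_t W (G t) i j * quant q (y t j ord0) -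
       weight_t W (G t) i j * quant q (y t i ord0))); last by move=> j _; rewrite mulrBr.
    rewrite sumrB -mulr_suml wt_sum mul1r; ring.
  rewrite inc mulr_sumr; apply: rpred_sum => j _.
  have [<-|ij] := eqVneq i j; first by rewrite subrr !mulr0 int_num0.
  rewrite mulrA; apply: rpredM; last by rewrite !quantE rpredB ?intr_int.
  rewrite wt_off //; case: ifP => _; [exact: HM | by rewrite mulr0 int_num0].
have yb t i : (T0 <= t)%N -> `|y t i ord0| <= B%:R + 1.
  move=> Tt; have := inv t Tt i; rewrite -ler_norml -(ler_int R) intr_norm pmulrn => h.
  have h2 := quant_near q (y t i ord0); rewrite quantE in h2.
  have h3 := ler_normD ((Qi q (y t i ord0))%:~R) (y t i ord0 - (Qi q (y t i ord0))%:~R).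
  rewrite addrC subrK in h3; apply: le_trans h3 _; exact: lerD.
pose Nb : nat := (M * (B + B + 2))%N.
exists ([seq y t i ord0 | t <- iota 0 T0, i <- enum 'I_n] ++
        [seq y T0 i ord0 + (z%:R - Nb%:R) / M%:R | i <- enum 'I_n, z <- iota 0 (Nb + Nb).+1]).
move=> t i; rewrite mem_cat; apply/orP.
have [tT|tT] := ltnP t T0.
  left; apply: (allpairs_f (fun t i => y t i ord0)); last by rewrite mem_enum.
  by rewrite mem_iota.
right.
have /intrP [m Hm] := lat t tT i.
have mb : `|M%:R * (y t i ord0 - y T0 i ord0)| <= Nb%:R.
  rewrite normrM ger0_norm ?ler0n // /Nb natrM ler_pM2l // natrD natrD.
  apply: le_trans (ler_normB _ _) _.
  have := yb t i tT; have := yb T0 i (leqnn T0); rewrite (natrD _ 1 1); lra.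
rewrite Hm -intr_norm pmulrn ler_int ler_norml in mb.
case/andP: mb => m1 m2.
have z0 : (0 <= m + Nb%:Z)%R by rewrite -lerBlDr sub0r.
pose z := absz (m + Nb%:Z).
have zE : (z%:R : R) = (m + Nb%:Z)%:~R by rewrite pmulrn /z abszE ger0_norm.
have -> : y t i ord0 = y T0 i ord0 + (z%:R - Nb%:R) / M%:R.
  rewrite zE intrD -pmulrn addrK -Hm mulrAC mulfV ?gt_eqF // mul1r; ring.
apply: (allpairs_f (fun i z => y T0 i ord0 + (z%:R - Nb%:R) / M%:R)); first by rewrite mem_enum.
rewrite mem_iota add0n ltnS leq0n /=.
rewrite -lez_nat /z abszE ger0_norm // PoszD.
by rewrite lerD2r.
Qed.


End det.
Lemma roundD0 (R : realType) (D z : R) : 0 < D -> z < D / 2 -> roundD D z = 0.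
Proof.
move=> D0 h; rewrite /roundD.
have hz : z / D < 2^-1 by rewrite ltr_pdivrMr // mulrC; lra.
have : Num.floor (z / D + 2^-1) <= 0.
  by rewrite -ltzD1 floor_lt_int add0r; lra.
by move=> fl; rewrite max_l // mulr0.
Qed.

Lemma interval_const (R : realType) (D mu : R) : 0 < D -> ~ boundary_set D mu ->
  exists a b, [/\ a < mu, mu < b & forall z, a < z -> z < b -> roundD D z = roundD D mu].
Proof.
move=> D0 nb.
have muE : mu = (mu / D) * D by rewrite divfK ?gt_eqF.
set v := mu / D in muE.
set g := Num.floor (v + 2^-1).
have gi := floor_itv (v + 2^-1); rewrite -/g intrD in gi.
case/andP: gi => gl gu.
have [gv|gv] := ltP g%:~R (v + 2^-1).
  exists ((g%:~R - 2^-1) * D), ((g%:~R + 2^-1) * D); split.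
  - by rewrite muE ltr_pM2r //; lra.
  - by rewrite muE ltr_pM2r //; lra.
  - move=> z h1 h2; rewrite /roundD -/v -/g; congr (_ * (Num.max _ _)%:~R).
    have zE : z = (z / D) * D by rewrite divfK ?gt_eqF.
    rewrite zE ltr_pM2r // in h1; rewrite zE ltr_pM2r // in h2.
    by apply: floor_def; rewrite intrD; apply/andP; split; lra.
have vg : v + 2^-1 = g%:~R by apply/eqP; rewrite eq_le gv gl.
have [g0|g1] := leP g 0.
  have g0' : (g%:~R : R) <= 0 by rewrite -(ler_int R) in g0.
  have muD : mu < D / 2 by rewrite muE; nra.
  exists (mu - 1), (D / 2); split => //; first by lra.
  by move=> z _ h; rewrite !roundD0.
exfalso; apply: nb.
exists `|g - 1|%N.
have -> : (`|g - 1|%N%:R : R) = (g - 1)%:~R.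
  have g1' : (1 <= g)%R by rewrite -(lez1D 0) addr0 in g1.
  by rewrite pmulrn gez0_abs // subr_ge0.
by rewrite muE intrB -vg; field.
Qed.

Unset Implicit Arguments. Set Strict Implicit.

Theorem lemma4 (R : realType) (d : measure_display) (T : measurableType d)
  (P : probability T R) (n : nat) (E : rel 'I_n) (W : 'M[R]_n)
  (G : nat -> T -> {set 'I_n * 'I_n}) (p : R)
  (X : 'I_n -> {RV P >-> R}) (x : 'I_n -> nat -> {RV P >-> R}) (K D : R)
  (q : quantizer) (y1 : T -> 'cV[R]_n) :
  undirected_graph E -> connected_graph E ->
  weight_matrix_ok E W ->
  (* random undirected graphs N(t) = G (t-1), E(t) a subset of E *)
  (forall t w i j, (i, j) \in G t w -> E i j) ->
  (forall t w i j, ((i, j) \in G t w) = ((j, i) \in G t w)) ->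
  (forall t S, measurable (G t @^-1` [set S])) ->
  0 < p ->
  (* Pr[(i,j) in E(t) | sigma(N(1),...,N(t-1))] >= p *)
  (forall t i j, E i j -> forall H : set (seq {set 'I_n * 'I_n}),
     (p%:E * P [set w | H (history G t w)]
      <= P ([set w | H (history G t w)] `&` [set w | (i, j) \in G t w]))%E) ->
  (* samples: x i k = x_i(k+1), i.i.d. copies of X i, |X i| <= K *)
  (forall i w, `|X i w| <= K) ->
  (forall i, mutually_independent P (fun k => x i k)) ->
  (forall i k, identically_distributed P (x i k) (X i)) ->
  0 < D ->
  (forall i, ~ boundary_set D (fine 'E_P[X i])) ->
  {ae P, forall w, exists S : seq R, forall (t : nat) (i : 'I_n),
     ytraj q D W (fun s => G s w) (fun i k => x i k w) (y1 w) t i ord0 \in S}.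
Proof.
move=> _ _ Wok _ _ _ _ _ XK indep idd D0 nb.
have Hi : forall i : 'I_n, {ae P, forall w, exists t0, forall t, (t0 <= t)%N ->
    roundD D (smean (fun k => x i k w) t.+1) = roundD D (fine 'E_P[X i])}.
  move=> i.
  have [a [b [amu mub Hab]]] := interval_const D0 (nb i).
  rewrite expectation_def in amu mub Hab.
  have L := @lower_ae d T R P (fun k => x i k) (X i) K a (measurable_funPT (X i))
    (fun k => measurable_funPT (x i k)) (XK i) (indep i) (fun k => idd i k) amu.
  have U := @upper_ae d T R P (fun k => x i k) (X i) K b (measurable_funPT (X i))
    (fun k => measurable_funPT (x i k)) (XK i) (indep i) (fun k => idd i k) mub.
  move: L U; apply: filterS2 => w [t1 H1] [t2 H2].
  exists (maxn t1 t2) => t tt; rewrite expectation_def; apply: Hab.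
    by apply: H1; apply: leq_trans tt; exact: leq_maxl.
  by apply: H2; apply: leq_trans tt; exact: leq_maxr.
have HH : \forall w \ae P, forall i : 'I_n, exists t0 : nat, forall t, (t0 <= t)%N ->
    roundD D (smean (fun k => x i k w) t.+1) = roundD D (fine 'E_P[X i]).
  by apply: filter_forall => i; exact: Hi.
move: HH; apply: filterS => w /fin_all_exists [t0 Ht0].
apply: (@det_finite R n E W q D (fun s => G s w) (fun i k => x i k w) (y1 w) (\max_i t0 i) Wok).
move=> i t tT.
rewrite (Ht0 i t); last by apply: leq_trans tT; exact: leq_bigmax.
rewrite (Ht0 i (\max_i t0 i)) //; exact: leq_bigmax.
Qed.
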